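(* There exist a constant $c>0$ and a sequence $(\Phi_n(x))_{n\ge0}$ of existential Presburger formulas with one free variable, of size $O(n^2)$, such that for all sufficiently large $n$, every quantifier-free Presburger formula $\varphi_n$ equivalent to $\Phi_n$ satisfies $|\varphi_n|\ge 2^{cn}$ (sizes measured with constants in binary).
   Context: Presburger arithmetic is the first-order theory of $\langle\mathbb{Z};+,<,(\equiv_m)_m,0,1\rangle$ with atoms $\sum a_ix_i\le b$ and $\sum a_ix_i\equiv b\pmod m$. Quantifier-free formulas are Boolean combinations of atoms; existential formulas are $\exists\bm{u}\colon\chi$ with $\chi$ quantifier-free. The size $|\varphi|$ is the number of symbols to write $\varphi$ with constants in binary. Two formulas are equivalent if they define the same subset of $\mathbb{Z}$. *)

(* Defs.v *)
From Stdlib Require Import ZArith List Reals.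
Import ListNotations.

(* A linear term sum_i a_i * x_{v_i}, as a list of (coefficient, variable index). *)
Definition lterm := list (Z * nat).

Inductive atom : Type :=
| ALe  : lterm -> Z -> atom
| ACong : lterm -> Z -> Z -> atom.  (* ACong t b m : t == b (mod m) *)

Inductive qf : Type :=
| QAtom : atom -> qf
| QNot  : qf -> qf
| QAnd  : qf -> qf -> qf
| QOr   : qf -> qf -> qf.

(* Existential formula  exists u_1 .. u_k, chi  ; variable 0 is the free
   variable x and variables 1..k are the quantified ones. *)
Record exformula : Type := Ex { ex_nvars : nat; ex_body : qf }.

Definition eval_term (e : nat -> Z) (t : lterm) : Z :=
  fold_right (fun p acc => (fst p * e (snd p) + acc)%Z) 0%Z t.

Definition atom_holds (e : nat -> Z) (a : atom) : Prop :=
  match a with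
  | ALe t b => (eval_term e t <= b)%Z
  | ACong t b m => (m | eval_term e t - b)%Z
  end.

Fixpoint qf_holds (e : nat -> Z) (f : qf) : Prop :=
  match f with
  | QAtom a => atom_holds e a
  | QNot f => ~ qf_holds e f
  | QAnd f g => qf_holds e f /\ qf_holds e g
  | QOr f g => qf_holds e f \/ qf_holds e g
  end.

Definition qf_set (f : qf) (z : Z) : Prop := qf_holds (fun _ => z) f.

Definition ex_set (F : exformula) (z : Z) : Prop :=
  exists u : nat -> Z,
    qf_holds (fun i => match i with O => z | S j => u j end) (ex_body F).

Definition atom_vars (a : atom) : list nat :=
  match a with ALe t _ => map snd t | ACong t _ _ => map snd t end.

Definition atom_wf (a : atom) : Prop :=
  match a with ALe _ _ => True | ACong _ _ m => (0 < m)%Z end.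

Fixpoint qf_vars (f : qf) : list nat :=
  match f with
  | QAtom a => atom_vars a
  | QNot f => qf_vars f
  | QAnd f g | QOr f g => qf_vars f ++ qf_vars g
  end.

Fixpoint qf_wf (f : qf) : Prop :=
  match f with
  | QAtom a => atom_wf a
  | QNot f => qf_wf f
  | QAnd f g | QOr f g => qf_wf f /\ qf_wf g
  end.

Definition qf_one_var (f : qf) : Prop :=
  qf_wf f /\ forall v, In v (qf_vars f) -> v = 0%nat.

Definition ex_one_var (F : exformula) : Prop :=
  qf_wf (ex_body F) /\ forall v, In v (qf_vars (ex_body F)) -> (v <= ex_nvars F)%nat.

(* binary length of an integer constant, plus one symbol for the sign *)
Definition zbits (a : Z) : nat := S (Z.to_nat (Z.log2 (Z.abs a)) + 1).

Definition term_size (t : lterm) : nat :=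
  fold_right (fun p acc => (zbits (fst p) + 1 + 1 + acc)%nat) 1%nat t.

Definition atom_size (a : atom) : nat :=
  match a with
  | ALe t b => (term_size t + 1 + zbits b)%nat
  | ACong t b m => (term_size t + 1 + zbits b + zbits m)%nat
  end.

Fixpoint qf_size (f : qf) : nat :=
  match f with
  | QAtom a => atom_size a
  | QNot f => S (qf_size f)
  | QAnd f g | QOr f g => S (qf_size f + qf_size g)
  end.

Definition ex_size (F : exformula) : nat := (1 + ex_nvars F + qf_size (ex_body F))%nat.

(* Main.v *)
Require Import Defs.
From Stdlib Require Import ZArith List Reals Lia Lra.
From mathcomp Require ssreflect ssrbool ssrnat binomial.
Import ListNotations.
Open Scope Z_scope.

Definition csum (t : lterm) : Z := fold_right (fun p acc => fst p + acc) 0 t.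

Lemma eval_const z t : eval_term (fun _ => z) t = csum t * z.
Proof. induction t as [|[a v] t IH]; simpl; [ring|]. unfold eval_term in *. simpl. rewrite IH. ring. Qed.

Lemma zbits_bound a : Z.abs a < 2 ^ Z.of_nat (zbits a).
Proof.
  unfold zbits.
  destruct (Z.eq_dec a 0) as [->|Ha]. simpl. lia.
  assert (H := Z.log2_spec (Z.abs a) ltac:(lia)).
  assert (H0 := Z.log2_nonneg (Z.abs a)).
  replace (Z.of_nat (S (Z.to_nat (Z.log2 (Z.abs a)) + 1))) with (Z.succ (Z.log2 (Z.abs a)) + 1) by lia.
  rewrite Z.pow_add_r by lia. lia.
Qed.

Lemma pow_mono (a b : nat) : (a <= b)%nat -> 2 ^ Z.of_nat a <= 2 ^ Z.of_nat b.
Proof. intro. apply Z.pow_le_mono_r; lia. Qed.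

Lemma atom_size_ge t b : (zbits b <= atom_size (ALe t b))%nat.
Proof. simpl. lia. Qed.

Lemma periodic (f : qf) : qf_wf f ->
  exists M, 1 <= M <= 2 ^ Z.of_nat (qf_size f) /\
   forall z w, 2 ^ Z.of_nat (qf_size f) < z -> 2 ^ Z.of_nat (qf_size f) < w ->
     (M | z - w) -> (qf_set f z <-> qf_set f w).
Proof.
  unfold qf_set. induction f as [a| f IH | f IHf g IHg | f IHf g IHg]; intro Hwf.
  - destruct a as [t b | t b m]; simpl in *.
    + exists 1. assert (0 < 2 ^ Z.of_nat (atom_size (ALe t b))) by (apply Z.pow_pos_nonneg; lia).
      split. lia.
      intros z w Hz Hw _. rewrite !eval_const.
      assert (Hb := zbits_bound b).
      assert (Hle := pow_mono _ _ (atom_size_ge t b)). unfold atom_size in Hle.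
      assert (Hzb : Z.abs b < z) by lia. assert (Hwb : Z.abs b < w) by lia.
      clear Hz Hw Hle Hb.
      destruct (Z.lt_total (csum t) 0) as [Hc|[Hc|Hc]].
      * assert (csum t * z <= - z) by nia. assert (csum t * w <= - w) by nia. split; intros _; lia.
      * rewrite Hc. lia.
      * assert (csum t * z >= z) by nia. assert (csum t * w >= w) by nia. split; intros; lia.
    + exists m.
      assert (Hb := zbits_bound m).
      assert (Hle : (zbits m <= term_size t + 1 + zbits b + zbits m)%nat) by lia.
      apply pow_mono in Hle. split. lia.
      intros z w _ _ [c Hc]. rewrite !eval_const.
      replace (csum t * w - b) with ((csum t * z - b) + (-(csum t * c)) * m) by nia.
      split; intro H. apply Z.divide_add_r; auto. apply Z.divide_mul_r, Z.divide_refl.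
      replace (csum t * z - b) with ((csum t * z - b + - (csum t * c) * m) + (csum t * c) * m) by ring.
      apply Z.divide_add_r; auto. apply Z.divide_mul_r, Z.divide_refl.
  - destruct (IH Hwf) as [M [HM HP]]. exists M. simpl.
    assert (H1 := pow_mono (qf_size f) (S (qf_size f)) ltac:(lia)).
    split. lia. intros z w Hz Hw Hd. specialize (HP z w ltac:(lia) ltac:(lia) Hd). tauto.
  - destruct Hwf as [Hf Hg]. destruct (IHf Hf) as [M1 [HM1 HP1]]. destruct (IHg Hg) as [M2 [HM2 HP2]].
    exists (M1 * M2). simpl.
    assert (H1 := pow_mono (qf_size f) (S (qf_size f + qf_size g)) ltac:(lia)).
    assert (H2 := pow_mono (qf_size g) (S (qf_size f + qf_size g)) ltac:(lia)).
    assert (H3 : 2 ^ Z.of_nat (qf_size f) * 2 ^ Z.of_nat (qf_size g) <= 2 ^ Z.of_nat (S (qf_size f + qf_size g))).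
    { rewrite <- Z.pow_add_r by lia. apply Z.pow_le_mono_r; lia. }
    split. nia. intros z w Hz Hw Hd.
    specialize (HP1 z w ltac:(lia) ltac:(lia) (Z.divide_trans _ _ _ (Z.divide_factor_l _ _) Hd)).
    specialize (HP2 z w ltac:(lia) ltac:(lia) (Z.divide_trans _ _ _ (Z.divide_factor_r _ _) Hd)).
    tauto.
  - destruct Hwf as [Hf Hg]. destruct (IHf Hf) as [M1 [HM1 HP1]]. destruct (IHg Hg) as [M2 [HM2 HP2]].
    exists (M1 * M2). simpl.
    assert (H1 := pow_mono (qf_size f) (S (qf_size f + qf_size g)) ltac:(lia)).
    assert (H2 := pow_mono (qf_size g) (S (qf_size f + qf_size g)) ltac:(lia)).
    assert (H3 : 2 ^ Z.of_nat (qf_size f) * 2 ^ Z.of_nat (qf_size g) <= 2 ^ Z.of_nat (S (qf_size f + qf_size g))).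
    { rewrite <- Z.pow_add_r by lia. apply Z.pow_le_mono_r; lia. }
    split. nia. intros z w Hz Hw Hd.
    specialize (HP1 z w ltac:(lia) ltac:(lia) (Z.divide_trans _ _ _ (Z.divide_factor_l _ _) Hd)).
    specialize (HP2 z w ltac:(lia) ltac:(lia) (Z.divide_trans _ _ _ (Z.divide_factor_r _ _) Hd)).
    tauto.
Qed.
Module Bin.
Import ssreflect ssrbool ssrnat binomial.
Local Open Scope nat_scope.
Lemma F1 n k : Nat.mul (S n) (binomial n k) = Nat.mul (S k) (binomial (S n) (S k)).
Proof. have := mul_bin_diag n.+1 k. by rewrite /= -!multE. Qed.
Lemma F2 n k : Nat.mul (S k) (binomial n (S k)) = Nat.mul (Nat.sub n k) (binomial n k).
Proof. by rewrite !multE ?minusE mul_bin_left. Qed.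
Lemma F3 n k : le k n -> lt 0 (binomial n k).
Proof. move/leP=> h. apply/ltP. by rewrite bin_gt0. Qed.
Lemma F4 n k : binomial (S n) (S k) = Nat.add (binomial n (S k)) (binomial n k).
Proof. by rewrite binS plusE. Qed.
Lemma F5 m : binomial (Nat.add (Nat.mul 2 m) 1) m = binomial (Nat.add (Nat.mul 2 m) 1) (Nat.add m 1).
Proof. have h: (m <= 2*m+1). apply/leP; rewrite -?plusE -?multE; lia. rewrite -(bin_sub h). f_equal. rewrite -?plusE -?multE -?minusE. lia. Qed.
Lemma F6 n : binomial n 1 = n. Proof. exact: bin1. Qed.
Lemma F7 : binomial 1 1 = 1. Proof. by []. Qed.
End Bin.
Notation binom := binomial.binomial.

Lemma binom_div : forall k n, (1 <= k <= n)%nat -> forall M,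
  (forall i, (n - k + 1 <= i <= n)%nat -> (Z.of_nat i | M)) ->
  (Z.of_nat (k * binom n k) | M).
Proof.
  induction k as [|k IH]; intros n Hk M HM. lia.
  destruct (Nat.eq_dec k 0) as [->|Hk0].
  { rewrite Bin.F6. replace (1 * n)%nat with n by lia. apply HM. lia. }
  destruct n as [|n1]. lia.
  assert (HA := IH n1 ltac:(lia) M ltac:(intros i Hi; apply HM; lia)).
  assert (HB := IH (S n1) ltac:(lia) M ltac:(intros i Hi; apply HM; lia)).
  assert (E1 := Bin.F1 n1 k). assert (E2 := Bin.F2 (S n1) k).
  assert (P1 := Bin.F3 n1 k ltac:(lia)). assert (P2 := Bin.F3 (S n1) k ltac:(lia)).
  set (c := binom n1 k) in *. set (e := binom (S n1) k) in *.
  set (d := binom (S n1) (S k)) in *.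
  destruct HA as [a Ha]. destruct HB as [b Hb].
  set (A := Z.of_nat (k * c)) in *. set (B := Z.of_nat (k * e)) in *.
  set (D := Z.of_nat (S k * d)).
  assert (HAB : D * (B - A) = A * B).
  { unfold A, B, D. rewrite !Nat2Z.inj_mul.
    assert (Z.of_nat (S k) * Z.of_nat d = Z.of_nat (S n1) * Z.of_nat c) by (rewrite <- !Nat2Z.inj_mul; f_equal; lia).
    assert (Z.of_nat (S k) * Z.of_nat d = (Z.of_nat (S n1) - Z.of_nat k) * Z.of_nat e).
    { rewrite <- Nat2Z.inj_sub by lia. rewrite <- !Nat2Z.inj_mul; f_equal; lia. }
    nia. }
  assert (HApos : 0 < A) by (unfold A; nia). assert (HBpos : 0 < B) by (unfold B; nia).
  exists (a - b).
  apply (Z.mul_reg_r _ _ (A * B)). lia.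
  replace ((a - b) * D * (A * B)) with ((a * A) * (D * B) - (b * B) * (D * A)) by ring.
  rewrite <- Ha, <- Hb.
  replace (M * (D * B) - M * (D * A)) with (M * (D * (B - A))) by ring.
  rewrite HAB. ring.
Qed.

Lemma binom_mid : forall m, (2 ^ m <= binom (2 * m + 1) (m + 1))%nat.
Proof.
  induction m as [|m IH]. change (2*0+1)%nat with 1%nat; change (0+1)%nat with 1%nat; rewrite Bin.F7; simpl; lia.
  replace (2 * S m + 1)%nat with (S (S (2 * m + 1))) by lia.
  replace (S m + 1)%nat with (S (S m)) by lia.
  rewrite Bin.F4. rewrite (Bin.F4 (2 * m + 1) m).
  rewrite Bin.F5. replace (S m) with (m + 1)%nat by lia.
  rewrite Nat.pow_add_r. simpl Nat.pow. lia.
Qed.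

Fixpoint zt (sg : Z) (n : nat) : lterm :=
  match n with O => [] | S m => (sg * 2 ^ Z.of_nat m, (2 + m)%nat) :: zt sg m end.

Fixpoint W (g : nat -> Z) (n : nat) : Z :=
  match n with O => 0 | S m => W g m + 2 ^ Z.of_nat m * g m end.

Definition tt0 : qf := QAtom (ALe [] 0).
Definition eqq (t1 t2 : lterm) : qf := QAnd (QAtom (ALe t1 0)) (QAtom (ALe t2 0)).

Fixpoint bits (n : nat) : qf :=
  match n with
  | O => tt0
  | S m => QAnd (QOr (eqq [(1, (2+m)%nat)] [(-1, (2+m)%nat)])
                     (eqq [(1, (2+m)%nat); (-1, 1%nat)] [(-1, (2+m)%nat); (1, 1%nat)]))
                (bits m)
  end.

Definition mainq (n : nat) : qf :=
  eqq ((-1, 0%nat) :: (2 ^ Z.of_nat n, 1%nat) :: zt 1 n)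
      ((1, 0%nat) :: (- 2 ^ Z.of_nat n, 1%nat) :: zt (-1) n).

Definition Phi (n : nat) : exformula := Ex (S n) (QAnd (mainq n) (bits n)).

Lemma eval_zt (env : nat -> Z) sg n : eval_term env (zt sg n) = sg * W (fun m => env (S (S m))) n.
Proof. unfold eval_term. induction n as [|n IH]; simpl. ring. rewrite IH. ring. Qed.

Lemma bits_sem e n : qf_holds e (bits n) <-> forall m, (m < n)%nat -> e (S (S m)) = 0 \/ e (S (S m)) = e 1%nat.
Proof.
  induction n as [|n IH]; cbn [bits qf_holds].
  - split; intros. lia. unfold tt0, eval_term. cbn. lia.
  - unfold eqq; cbn [qf_holds atom_holds Nat.add]. rewrite IH. unfold eval_term; cbn [fold_right fst snd]. split.
    + intros [H1 H2] m Hm. destruct (Nat.eq_dec m n) as [->|]. lia. apply H2; lia.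
    + intros H. split. specialize (H n ltac:(lia)). lia. intros; apply H; lia.
Qed.

Lemma main_sem e n : qf_holds e (mainq n) <-> e 0%nat = 2 ^ Z.of_nat n * e 1%nat + W (fun m => e (S (S m))) n.
Proof.
  unfold mainq, eqq. cbn [qf_holds atom_holds]. unfold eval_term. cbn [fold_right fst snd]. fold (eval_term e (zt 1 n)). fold (eval_term e (zt (-1) n)).
  rewrite !eval_zt. lia.
Qed.

Lemma W_ext g1 g2 n : (forall m, (m < n)%nat -> g1 m = g2 m) -> W g1 n = W g2 n.
Proof. induction n; simpl; intros H. auto. rewrite IHn by (intros; apply H; lia). rewrite H by lia. auto. Qed.

Lemma W_bits g y n : (forall m, (m < n)%nat -> g m = 0 \/ g m = y) ->
  exists s, 0 <= s < 2 ^ Z.of_nat n /\ W g n = s * y.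
Proof.
  induction n as [|n IH]; intros H; cbn [W].
  - exists 0. simpl. lia.
  - destruct IH as [s [Hs Hw]]. intros; apply H; lia.
    rewrite Hw. rewrite Nat2Z.inj_succ, Z.pow_succ_r by lia.
    destruct (H n ltac:(lia)) as [-> | ->].
    + exists s. lia.
    + exists (s + 2 ^ Z.of_nat n). split. lia. ring.
Qed.

Lemma W_exists y n : forall s, 0 <= s < 2 ^ Z.of_nat n ->
  exists g : nat -> Z, (forall m, g m = 0 \/ g m = y) /\ W g n = s * y.
Proof.
  induction n as [|n IH]; intros s Hs.
  - simpl in Hs. exists (fun _ => 0). split; auto. simpl. assert (s = 0) by lia. subst. ring.
  - rewrite Nat2Z.inj_succ, Z.pow_succ_r in Hs by lia.
    destruct (Z.lt_ge_cases s (2 ^ Z.of_nat n)) as [Hl|Hl].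
    + destruct (IH s ltac:(lia)) as [g [Hg Hw]].
      exists (fun m => if Nat.eq_dec m n then 0 else g m). split.
      * intros m. destruct (Nat.eq_dec m n); auto.
      * simpl. rewrite (W_ext _ g). destruct (Nat.eq_dec n n); [|lia]. rewrite Hw. ring.
        intros m Hm. destruct (Nat.eq_dec m n); [lia|auto].
    + destruct (IH (s - 2 ^ Z.of_nat n) ltac:(lia)) as [g [Hg Hw]].
      exists (fun m => if Nat.eq_dec m n then y else g m). split.
      * intros m. destruct (Nat.eq_dec m n); auto.
      * simpl. rewrite (W_ext _ g). destruct (Nat.eq_dec n n); [|lia]. rewrite Hw. ring.
        intros m Hm. destruct (Nat.eq_dec m n); [lia|auto].
Qed.

Definition Sn (n : nat) (z : Z) : Prop :=
  exists k y, 2 ^ Z.of_nat n <= k < 2 * 2 ^ Z.of_nat n /\ z = k * y.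

Lemma Phi_sem n z : ex_set (Phi n) z <-> Sn n z.
Proof.
  unfold ex_set, Phi, Sn. cbn [ex_body qf_holds]. split.
  - intros [u [H1 H2]]. apply main_sem in H1. rewrite bits_sem in H2. simpl in H1, H2.
    destruct (W_bits (fun m => u (S m)) (u 0%nat) n H2) as [s [Hs Hw]].
    exists (2 ^ Z.of_nat n + s), (u 0%nat). split. lia. rewrite H1, Hw. ring.
  - intros [k [y [Hk ->]]].
    destruct (W_exists y n (k - 2 ^ Z.of_nat n) ltac:(lia)) as [g [Hg Hw]].
    exists (fun j => match j with O => y | S m => g m end). split.
    + apply main_sem. cbn beta iota. change (fun m : nat => g m) with g. rewrite Hw. ring.
    + apply bits_sem. intros m _. simpl. apply Hg.
Qed.

Lemma fact_div : forall N i, (1 <= i <= N)%nat -> (Z.of_nat i | Z.of_nat (fact N)).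
Proof.
  induction N as [|N IH]; intros i Hi. lia.
  cbn [fact]. rewrite Nat2Z.inj_mul.
  destruct (Nat.eq_dec i (S N)) as [->|Hne].
  - apply Z.divide_factor_l.
  - apply Z.divide_mul_r. apply IH. lia.
Qed.

Lemma divides_all n M T : 1 <= M -> 0 <= T ->
  (forall z w, T < z -> T < w -> (M | z - w) -> (Sn n z <-> Sn n w)) ->
  forall k, 2 ^ Z.of_nat n <= k < 2 * 2 ^ Z.of_nat n -> (k | M).
Proof.
  intros HM HT HP k Hk. set (a := 2 ^ Z.of_nat n) in *.
  assert (Ha : 1 <= a) by (unfold a; assert (H:= Z.pow_pos_nonneg 2 (Z.of_nat n)); lia).
  set (g := Z.gcd k M).
  assert (Hgk : (g | k)) by apply Z.gcd_divide_l.
  assert (HgM : (g | M)) by apply Z.gcd_divide_r.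
  assert (Hg0 : 0 < g). { assert (0 <= g) by apply Z.gcd_nonneg. assert (g <> 0). intro H0. apply Z.gcd_eq_0 in H0. lia. lia. }
  destruct Hgk as [q Hq].
  destruct (Z.eq_dec q 1) as [->|Hq1]. { rewrite Hq. rewrite Z.mul_1_l. exact HgM. }
  exfalso.
  assert (Hq2 : 2 <= q) by nia.
  assert (Hga : g < a) by nia.
  destruct (Z.gcd_bezout k M g eq_refl) as [al [be Hbez]].
  set (F := Z.of_nat (fact (Z.to_nat (2 * a)))).
  assert (HF : 1 <= F) by (unfold F; assert (H := lt_O_fact (Z.to_nat (2*a))); lia).
  set (Q := F * (T + 1)).
  set (y0 := g + M * Q).
  set (R := Z.abs al + T + 1).
  set (x0 := k * (al + M * R)).
  assert (Hy0 : T < y0) by (unfold y0, Q; nia).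
  assert (HR : T + 1 <= al + M * R) by (unfold R; nia).
  assert (Hx0 : T < x0) by (unfold x0; nia).
  assert (Hd : (M | x0 - y0)).
  { exists (k * R - be - Q). unfold x0, y0. rewrite <- Hbez. ring. }
  assert (Sx : Sn n x0) by (exists k, (al + M * R); split; [exact Hk | reflexivity]).
  apply (HP x0 y0 Hx0 Hy0 Hd) in Sx.
  destruct Sx as [k' [y [Hk' Hy]]].
  assert (Hk'F : (k' | F)).
  { unfold F. replace k' with (Z.of_nat (Z.to_nat k')) by lia. apply fact_div. lia. }
  assert (Hk'g : (k' | g)).
  { replace g with (y0 - M * Q) by (unfold y0; ring). apply Z.divide_sub_r.
    rewrite Hy. apply Z.divide_factor_l.
    apply Z.divide_mul_r. unfold Q. apply Z.divide_mul_l. exact Hk'F. }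
  apply Z.divide_pos_le in Hk'g; lia.
Qed.

Lemma zbits_pow sg m : (sg = 1 \/ sg = -1) -> zbits (sg * 2 ^ Z.of_nat m) = (m + 2)%nat.
Proof.
  intros Hs. unfold zbits.
  replace (Z.abs (sg * 2 ^ Z.of_nat m)) with (2 ^ Z.of_nat m).
  - rewrite Z.log2_pow2 by lia. rewrite Nat2Z.id. lia.
  - rewrite Z.abs_mul. assert (H := Z.pow_pos_nonneg 2 (Z.of_nat m)).
    rewrite (Z.abs_eq (2 ^ _)) by lia. destruct Hs as [->| ->]; cbn [Z.abs]; ring.
Qed.

Lemma zt_size sg n : (sg = 1 \/ sg = -1) -> (term_size (zt sg n) <= n * (n + 4) + 1)%nat.
Proof.
  intros Hs. induction n as [|n IH]. simpl. lia.
  unfold term_size in *. cbn [zt fold_right fst]. rewrite zbits_pow by auto. lia.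
Qed.

Lemma bits_size n : qf_size (bits n) = (44 * n + 4)%nat.
Proof.
  induction n as [|n IH]. reflexivity.
  change (qf_size (bits (S n))) with (44 + qf_size (bits n))%nat. lia.
Qed.

Lemma main_size n : (qf_size (mainq n) <= 2 * (n * (n + 4) + 1) + 2 * n + 30)%nat.
Proof.
  unfold mainq, eqq. cbn [qf_size atom_size]. unfold term_size. cbn [fold_right fst].
  fold (term_size (zt 1 n)). fold (term_size (zt (-1) n)).
  assert (H1 := zt_size 1 n ltac:(lia)). assert (H2 := zt_size (-1) n ltac:(lia)).
  assert (H3 := zbits_pow 1 n ltac:(lia)). assert (H4 := zbits_pow (-1) n ltac:(lia)).
  rewrite Z.mul_1_l in H3. replace (-1 * 2 ^ Z.of_nat n) with (- 2 ^ Z.of_nat n) in H4 by ring.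
  rewrite H3, H4. change (zbits (-1)) with 2%nat. change (zbits 1) with 2%nat. change (zbits 0) with 2%nat.
  lia.
Qed.

Lemma zt_vars sg n v : In v (map snd (zt sg n)) -> (2 <= v <= S n)%nat.
Proof. induction n as [|n IH]; simpl; intros H. contradiction. destruct H as [<-|H]. lia. specialize (IH H). lia. Qed.

Lemma bits_vars n v : In v (qf_vars (bits n)) -> (v <= S n)%nat.
Proof.
  induction n as [|n IH]; simpl; intros H. contradiction.
  repeat (rewrite in_app_iff in H). simpl in H.
  repeat match goal with H : _ \/ _ |- _ => destruct H as [H|H] end; try lia; try contradiction.
  specialize (IH H). lia.
Qed.

Lemma bits_wf n : qf_wf (bits n).
Proof. induction n; simpl; tauto. Qed.

Lemma main_vars n v : In v (qf_vars (mainq n)) -> (v <= S n)%nat.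
Proof.
  unfold mainq, eqq. cbn [qf_vars atom_vars map snd]. intro H.
  rewrite in_app_iff in H. destruct H as [[<-|[<-|H]]|[<-|[<-|H]]]; try lia; apply zt_vars in H; lia.
Qed.

Lemma Phi_one n : ex_one_var (Phi n).
Proof.
  split.
  - simpl. split. unfold mainq, eqq. simpl. tauto. apply bits_wf.
  - intros v H. unfold Phi in *. cbn [ex_body ex_nvars qf_vars] in *. rewrite in_app_iff in H. destruct H as [H|H].
    + apply main_vars in H. lia.
    + apply bits_vars in H. lia.
Qed.

Theorem mainTheorem15 :
  exists (c : R), (0 < c)%R /\
  exists Phi : nat -> exformula,
    (forall n, ex_one_var (Phi n)) /\
    (exists (C N0 : nat), forall n, (N0 <= n)%nat -> (ex_size (Phi n) <= C * n * n)%nat) /\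
    (exists N : nat, forall n, (N <= n)%nat ->
       forall phi : qf, qf_one_var phi ->
         (forall z : Z, qf_set phi z <-> ex_set (Phi n) z) ->
         (Rpower 2 (c * INR n) <= INR (qf_size phi))%R).
Proof.
  exists (1/2)%R. split. lra.
  exists Phi. split. exact Phi_one. split.
  { exists 200%nat, 1%nat. intros n Hn. unfold ex_size, Phi. cbn [ex_nvars ex_body qf_size].
    assert (H := main_size n). rewrite bits_size. nia. }
  exists 2%nat. intros n Hn phi [Hwf _] Heq.
  destruct (periodic phi Hwf) as [M [HM HP]].
  set (s := qf_size phi) in *.
  assert (HT : 0 <= 2 ^ Z.of_nat s) by (apply Z.pow_nonneg; lia).
  assert (Hdiv := divides_all n M (2 ^ Z.of_nat s) ltac:(lia) HT
     ltac:(intros z w Hz Hw Hd; rewrite <- !Phi_sem, <- !Heq; apply HP; auto)).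
  set (N := (2 ^ n - 1)%nat).
  assert (H2n : (1 <= 2 ^ n)%nat) by (apply Nat.pow_le_mono_r with (a:=2%nat) (b:=0%nat); lia).
  assert (HNZ : Z.of_nat (N + 1) = 2 ^ Z.of_nat n) by (replace (N + 1)%nat with (2 ^ n)%nat by (unfold N; lia); rewrite Nat2Z.inj_pow; reflexivity).
  assert (Hb := binom_div (N + 1) (2 * N + 1) ltac:(lia) M
     ltac:(intros i Hi; apply Hdiv; lia)).
  apply Z.divide_pos_le in Hb; [|lia].
  assert (Hm := binom_mid N).
  assert (Hle : 2 ^ Z.of_nat N <= 2 ^ Z.of_nat s).
  { change 2 with (Z.of_nat 2). rewrite <- Nat2Z.inj_pow. apply Nat2Z.inj_le in Hm. rewrite Nat2Z.inj_mul in Hb.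
    assert (0 <= Z.of_nat (binom (2 * N + 1) (N + 1))) by lia. nia. }
  apply Z.pow_le_mono_r_iff in Hle; try lia.
  assert (HNs : (N <= s)%nat) by lia.
  assert (Hn1 : (n - 1 <= N)%nat).
  { assert (H := Nat.pow_gt_lin_r 2 n ltac:(lia)). unfold N. lia. }
  apply Rle_trans with (Rpower 2 (INR (n - 1))).
  - apply Rle_Rpower. lra. rewrite minus_INR by lia. change (INR 1) with 1%R.
    assert (H := le_INR 2 n Hn). simpl in H. lra.
  - rewrite Rpower_pow by lra.
    apply Rle_trans with (INR (2 ^ (n - 1))).
    + right. rewrite pow_INR. f_equal.
    + apply le_INR.
      assert (E : (2 ^ n = 2 * 2 ^ (n - 1))%nat).
      { replace n with (S (n - 1)) at 1 by lia. apply Nat.pow_succ_r'. }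
      assert (H1 : (1 <= 2 ^ (n - 1))%nat) by (apply Nat.pow_le_mono_r with (a:=2%nat) (b:=0%nat); lia).
      unfold N in HNs. lia.
Qed.
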